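(* Let $(M,\cdot)$ be a countable semigroup. The following two statements are equivalent. (i) (Hindman's theorem for $(M,\cdot)$.) For every IP set $X\subseteq M$ and every $Y\subseteq X$, either $Y$ or $X\setminus Y$ is an IP set. (ii) (Existence of idempotent types.) For every semigroup structure $\mathcal{M}$ based on $(M,\cdot)$ and every $\mathcal{M}$-definable set $X\subseteq M$ which is an IP set, there is an idempotent type $p(x)\in S_1(M)$ over $\mathcal{M}$ containing the formula defining $X$.
   Context: A semigroup structure is a first-order structure $\mathcal{M}=(M,\cdot,\ldots)$ in a countable language $L$ such that $(M,\cdot)$ is a semigroup; it is said to be based on $(M,\cdot)$. Definable means definable by an $L(M)$-formula, i.e. a formula with parameters from $M$. $S_n(M)$ denotes the space of complete $n$-types over $M$ (with respect to $\mathcal{M}$). A type $q(x,y)\in S_2(M)$ is independent if for every formula $\varphi(x,y)\in q$ there is $u\in M$ with $\varphi(u,y)\in q$. A type $p(x)\in S_1(M)$ is idempotent if there is an independent type $q(x,y)\in S_2(M)$ with $p(x)\cup p(y)\cup p(x\cdot y)\subseteq q(x,y)$ (here $p(y)$, $p(x\cdot y)$ denote the sets obtained by substituting $y$, resp. $x\cdot y$, for $x$ in the formulas of $p$). For a sequence $(u_n)_{n<\omega}$ in $M$, $\mathrm{FP}(u_n)=\{u_{i_1}\cdots u_{i_k}: k\ge 1,\ i_1<\cdots<i_k\}$. A set $X\subseteq M$ is an IP set if there is a sequence $(u_n)$ in $M$ with $\mathrm{FP}(u_n)\subseteq X$. *)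

(* Defs.v *)
From Stdlib Require Import List.
From mathcomp Require Import all_boot.
Set Implicit Arguments. Unset Strict Implicit. Unset Printing Implicit Defensive.

Section IP.
Variables (M : Type) (op : M -> M -> M).

Fixpoint lprod (a : M) (s : seq M) : M :=
  match s with [::] => a | b :: s' => op a (lprod b s') end.

(* x \in FP(u_n): x = u_{i1} ... u_{ik}, k >= 1, i1 < ... < ik *)
Definition FP (u : nat -> M) (x : M) : Prop :=
  exists (i : nat) (s : seq nat), sorted ltn (i :: s) /\ x = lprod (u i) (map u s).

Definition IPset (X : M -> Prop) : Prop :=
  exists u : nat -> M, forall x, FP u x -> X x.

Definition Hindman : Prop :=
  forall X Y : M -> Prop, IPset X -> (forall y, Y y -> X y) ->
    IPset Y \/ IPset (fun x => X x /\ ~ Y x).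
End IP.

Section Syntax.
Variables (M : Type) (F : Type) (arF : F -> nat) (R : Type) (arR : R -> nat).

Inductive term : Type :=
  | Var of nat
  | Par of M
  | Mul of term & term
  | App (f : F) of ('I_(arF f) -> term).

Inductive form : Type :=
  | Eq of term & term
  | Rel (r : R) of ('I_(arR r) -> term)
  | Neg of form
  | And of form & form
  | Ex of form.                               (* binds de Bruijn index 0 *)

Fixpoint tren (rho : nat -> nat) (t : term) : term :=
  match t with
  | Var i => Var (rho i)
  | Par a => Par a
  | Mul t1 t2 => Mul (tren rho t1) (tren rho t2)
  | App f a => App (fun i => tren rho (a i))
  end.

Fixpoint tsubst (sigma : nat -> term) (t : term) : term :=
  match t with
  | Var i => sigma i
  | Par a => Par a
  | Mul t1 t2 => Mul (tsubst sigma t1) (tsubst sigma t2)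
  | App f a => App (fun i => tsubst sigma (a i))
  end.

Definition up (sigma : nat -> term) : nat -> term :=
  fun i => match i with 0 => Var 0 | j.+1 => tren S (sigma j) end.

Fixpoint fsubst (sigma : nat -> term) (phi : form) : form :=
  match phi with
  | Eq t1 t2 => Eq (tsubst sigma t1) (tsubst sigma t2)
  | Rel r a => Rel (fun i => tsubst sigma (a i))
  | Neg phi => Neg (fsubst sigma phi)
  | And phi psi => And (fsubst sigma phi) (fsubst sigma psi)
  | Ex phi => Ex (fsubst (up sigma) phi)
  end.

Fixpoint twf (n : nat) (t : term) : Prop :=
  match t with
  | Var i => i < n
  | Par _ => True
  | Mul t1 t2 => twf n t1 /\ twf n t2
  | App f a => forall i, twf n (a i)
  end.

Fixpoint fwf (n : nat) (phi : form) : Prop :=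
  match phi with
  | Eq t1 t2 => twf n t1 /\ twf n t2
  | Rel r a => forall i, twf n (a i)
  | Neg phi => fwf n phi
  | And phi psi => fwf n phi /\ fwf n psi
  | Ex phi => fwf n.+1 phi
  end.

Variables (op : M -> M -> M) (iF : forall f : F, ('I_(arF f) -> M) -> M)
          (iR : forall r : R, ('I_(arR r) -> M) -> Prop).

Definition scons (a : M) (e : nat -> M) : nat -> M :=
  fun i => match i with 0 => a | j.+1 => e j end.

Fixpoint teval (e : nat -> M) (t : term) : M :=
  match t with
  | Var i => e i
  | Par a => a
  | Mul t1 t2 => op (teval e t1) (teval e t2)
  | App f a => iF (fun i => teval e (a i))
  end.

Fixpoint sat (e : nat -> M) (phi : form) : Prop :=
  match phi with
  | Eq t1 t2 => teval e t1 = teval e t2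
  | Rel r a => iR (fun i => teval e (a i))
  | Neg phi => ~ sat e phi
  | And phi psi => sat e phi /\ sat e psi
  | Ex phi => exists a, sat (scons a e) phi
  end.
End Syntax.

(* A countable language L = {·} ∪ (function symbols) ∪ (relation symbols),
   with "·" interpreted as op (the built-in Mul term constructor). *)
Record sgStructure (M : Type) (op : M -> M -> M) := SgStructure {
  sym_fun : countType;
  ar_fun : sym_fun -> nat;
  int_fun : forall f : sym_fun, ('I_(ar_fun f) -> M) -> M;
  sym_rel : countType;
  ar_rel : sym_rel -> nat;
  int_rel : forall r : sym_rel, ('I_(ar_rel r) -> M) -> Prop }.

Section Types.
Variables (M : Type) (op : M -> M -> M) (S : sgStructure op).

Definition formula := form M (@ar_fun M op S) (@ar_rel M op S).
Definition satS (e : nat -> M) (phi : formula) : Prop :=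
  sat op (@int_fun M op S) (@int_rel M op S) e phi.

(* complete n-type over M (variables x_0..x_{n-1}): a set of L(M)-formulas in
   these variables, consistent with Th(M_M) (= finitely satisfiable in M) and
   complete. *)
Definition is_ctype (n : nat) (p : formula -> Prop) : Prop :=
  [/\ (forall phi, p phi -> fwf n phi),
      (forall phi, fwf n phi -> p phi \/ p (Neg phi)) &
      (forall s : seq formula, (forall phi, List.In phi s -> p phi) ->
         exists e : nat -> M, forall phi, List.In phi s -> satS e phi)].

(* variables: x = index 0, y = index 1 *)
Definition sub_y : nat -> term M (@ar_fun M op S) :=
  fun i => match i with 0 => Var _ _ 1 | _ => Var _ _ i end.
Definition sub_xy : nat -> term M (@ar_fun M op S) :=
  fun i => match i with 0 => Mul (Var _ _ 0) (Var _ _ 1) | _ => Var _ _ i end.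
Definition sub_x_par (u : M) : nat -> term M (@ar_fun M op S) :=
  fun i => match i with 0 => Par _ u | _ => Var _ _ i end.

Definition independent (q : formula -> Prop) : Prop :=
  forall phi, q phi -> exists u : M, q (fsubst (sub_x_par u) phi).

Definition idempotent_type (p : formula -> Prop) : Prop :=
  is_ctype 1 p /\
  exists q, [/\ is_ctype 2 q, independent q &
    forall phi, p phi -> [/\ q phi, q (fsubst sub_y phi) & q (fsubst sub_xy phi)]].
End Types.

(* Main.v *)
From Stdlib Require Import List Classical ClassicalEpsilon FunctionalExtensionality.
Require Import Defs.
From mathcomp Require Import all_boot.
Set Implicit Arguments. Unset Strict Implicit. Unset Printing Implicit Defensive.

Section Sem.
Variables (M : Type) (F : Type) (arF : F -> nat) (R : Type) (arR : R -> nat).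
Variables (op : M -> M -> M) (iF : forall f : F, ('I_(arF f) -> M) -> M)
          (iR : forall r : R, ('I_(arR r) -> M) -> Prop).

Lemma teval_tren e rho (t : term M arF) :
  teval op iF e (tren rho t) = teval op iF (fun i => e (rho i)) t.
Proof.
elim: t => //= [t1 IH1 t2 IH2|f a IH]; first by rewrite IH1 IH2.
congr (iF _); apply: functional_extensionality => i; exact: IH.
Qed.

Lemma teval_tsubst e sigma (t : term M arF) :
  teval op iF e (tsubst sigma t) = teval op iF (fun i => teval op iF e (sigma i)) t.
Proof.
elim: t => //= [t1 IH1 t2 IH2|f a IH]; first by rewrite IH1 IH2.
congr (iF _); apply: functional_extensionality => i; exact: IH.
Qed.

Lemma sat_fsubst (phi : form M arF arR) : forall e sigma,
  sat op iF iR e (fsubst sigma phi) <->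
  sat op iF iR (fun i => teval op iF e (sigma i)) phi.
Proof.
elim: phi => [t1 t2|r a|phi IH|phi IH psi IH'|phi IH] e sigma /=.
- by rewrite !teval_tsubst.
- have -> : (fun i => teval op iF e (tsubst sigma (a i))) =
            (fun i => teval op iF (fun i => teval op iF e (sigma i)) (a i)).
    by apply: functional_extensionality => i; rewrite teval_tsubst.
  by [].
- by rewrite IH.
- by rewrite IH IH'.
- split=> [[x Hx]|[x Hx]]; exists x.
  + move/IH: Hx. congr (sat _ _ _ _ _).
    apply: functional_extensionality => -[|i] //=; by rewrite teval_tren.
  + apply/IH. move: Hx; congr (sat _ _ _ _ _).
    apply: functional_extensionality => -[|i] //=; by rewrite teval_tren.
Qed.

Lemma teval_local n (t : term M arF) e e' :
  twf n t -> (forall i, i < n -> e i = e' i) -> teval op iF e t = teval op iF e' t.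
Proof.
elim: t => //= [i|t1 IH1 t2 IH2|f a IH] H Hee; first exact: Hee.
  by case: H => H1 H2; rewrite (IH1 H1 Hee) (IH2 H2 Hee).
congr (iF _); apply: functional_extensionality => i; exact: IH.
Qed.

Lemma sat_local (phi : form M arF arR) : forall n e e',
  fwf n phi -> (forall i, i < n -> e i = e' i) ->
  (sat op iF iR e phi <-> sat op iF iR e' phi).
Proof.
elim: phi => [t1 t2|r a|phi IH|phi IH psi IH'|phi IH] n e e' /= H Hee.
- case: H => H1 H2. by rewrite (teval_local H1 Hee) (teval_local H2 Hee).
- have -> : (fun i => teval op iF e (a i)) = (fun i => teval op iF e' (a i)) => //.
  apply: functional_extensionality => i; exact: teval_local (H i) Hee.
- by rewrite (IH n e e').
- case: H => H1 H2. by rewrite (IH n e e') // (IH' n e e').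
- have Hs : forall x, (sat op iF iR (scons x e) phi <-> sat op iF iR (scons x e') phi).
    move=> x; apply: (IH n.+1) => // -[|i] //= Hi; exact: Hee.
  by split=> -[x Hx]; exists x; apply/Hs.
Qed.

Lemma twf_tren n m rho (t : term M arF) :
  twf n t -> (forall i, i < n -> rho i < m) -> twf m (tren rho t).
Proof.
elim: t => //= [i|t1 IH1 t2 IH2|f a IH] H Hr; first exact: Hr.
  by case: H => H1 H2; split; [exact: IH1|exact: IH2].
move=> i; exact: IH.
Qed.

Lemma twf_tsubst n m sigma (t : term M arF) :
  twf n t -> (forall i, i < n -> twf m (sigma i)) -> twf m (tsubst sigma t).
Proof.
elim: t => //= [i|t1 IH1 t2 IH2|f a IH] H Hr; first exact: Hr.
  by case: H => H1 H2; split; [exact: IH1|exact: IH2].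
move=> i; exact: IH.
Qed.

Lemma fwf_fsubst (phi : form M arF arR) : forall n m sigma,
  fwf n phi -> (forall i, i < n -> twf m (sigma i)) -> fwf m (fsubst sigma phi).
Proof.
elim: phi => [t1 t2|r a|phi IH|phi IH psi IH'|phi IH] n m sigma /= H Hs.
- case: H => H1 H2; split; exact: twf_tsubst Hs.
- move=> i; exact: twf_tsubst (H i) Hs.
- exact: IH H Hs.
- case: H => H1 H2; split; [exact: IH H1 Hs|exact: IH' H2 Hs].
- apply: (IH n.+1) H _ => -[|i] //= Hi.
  apply: twf_tren (Hs i Hi) _ => j Hj //.
Qed.

Lemma twf_mono n m (t : term M arF) : twf n t -> n <= m -> twf m t.
Proof.
elim: t => //= [i|t1 IH1 t2 IH2|f a IH] H Hnm.
- exact: leq_trans H Hnm.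
- by case: H => H1 H2; split; [exact: IH1|exact: IH2].
- move=> i; exact: IH.
Qed.

Lemma fwf_mono (phi : form M arF arR) : forall n m, fwf n phi -> n <= m -> fwf m phi.
Proof.
elim: phi => [t1 t2|r a|phi IH|phi IH psi IH'|phi IH] n m /= H Hnm.
- case: H => H1 H2; split; exact: twf_mono Hnm.
- move=> i; exact: twf_mono (H i) Hnm.
- exact: IH H Hnm.
- case: H => H1 H2; split; [exact: IH H1 Hnm|exact: IH' H2 Hnm].
- exact: IH H _.
Qed.
End Sem.
Section FPl.
Variables (M : Type) (op : M -> M -> M).

Lemma path_shift (i : nat) (s : seq nat) : path ltn i s -> path ltn i.+1 (map S s).
Proof. by elim: s i => //= j s IH i /andP[Hij /IH ->]; rewrite ltnS Hij. Qed.

Lemma FP_tail (v : nat -> M) x : FP op (fun n => v n.+1) x -> FP op v x.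
Proof.
case=> i [s [Hs ->]]; exists i.+1, (map S s); split; first exact: path_shift.
by rewrite -map_comp.
Qed.

Lemma FP_head_tail (v : nat -> M) b :
  FP op (fun n => v n.+1) b -> FP op v (op (v 0) b).
Proof.
case=> i [s [Hs ->]]; exists 0, (i.+1 :: map S s); split.
  by rewrite /= path_shift.
by rewrite /= -map_comp.
Qed.

Lemma FP_head (v : nat -> M) : FP op v (v 0).
Proof. by exists 0, [::]. Qed.

Lemma list_max (A : Type) (P : nat -> A -> Prop)
  (Pmono : forall n m x, n <= m -> P n x -> P m x) (s : list A) :
  (forall x, List.In x s -> exists n, P n x) ->
  exists N, forall x, List.In x s -> P N x.
Proof.
elim: s => [|a s IH] H; first by exists 0.
have [n Hn] := H a (or_introl erefl).
have [N HN] := IH (fun x Hx => H x (or_intror Hx)).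
exists (maxn n N) => x /= [<-|Hx].
  exact: Pmono (leq_maxl _ _) Hn.
exact: Pmono (leq_maxr _ _) (HN x Hx).
Qed.
End FPl.

Section CT.
Variables (M : Type) (op : M -> M -> M) (S : sgStructure op).

Lemma ctype_sat n (q : formula S -> Prop) phi :
  is_ctype n q -> q phi -> exists e, satS e phi.
Proof.
case=> _ _ Hc Hq. have [e He] := Hc [:: phi] (fun x Hx => ltac:(case: Hx => [<-|[]]; exact: Hq)).
by exists e; apply: He; left.
Qed.

Lemma ctype_and n (q : formula S -> Prop) phi psi :
  is_ctype n q -> q phi -> q psi -> q (And phi psi).
Proof.
move=> Hq; case: (Hq) => Hw Hcomp Hc H1 H2.
have [//|HN] := Hcomp (And phi psi) (conj (Hw _ H1) (Hw _ H2)).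
have [e He] := Hc [:: phi; psi; Neg (And phi psi)]
  (fun x Hx => ltac:(case: Hx => [<-|[<-|[<-|[]]]]; assumption)).
have := He (Neg (And phi psi)) (or_intror (or_intror (or_introl erefl))).
by move=> /= []; split; apply: He; [left|right; left].
Qed.
End CT.
Lemma pickle_inj (T : countType) : injective (@pickle T).
Proof. exact: pcan_inj pickleK. Qed.

Section Enc.
Variables (M F R : countType) (arF : F -> nat) (arR : R -> nat).

Fixpoint tenc (t : term M arF) : GenTree.tree nat :=
  match t with
  | Var i => GenTree.Node 0 [:: GenTree.Leaf i]
  | Par a => GenTree.Node 1 [:: GenTree.Leaf (pickle a)]
  | Mul t1 t2 => GenTree.Node 2 [:: tenc t1; tenc t2]
  | App f a => GenTree.Node 3 (GenTree.Leaf (pickle f) ::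
                 map (fun i => tenc (a i)) (enum 'I_(arF f)))
  end.

Lemma tenc_inj : injective tenc.
Proof.
elim => [i|x|t1 IH1 t2 IH2|f a IH] [j|y|u1 u2|g b] //=.
- by case=> ->.
- by case=> /pickle_inj ->.
- by case=> /IH1 -> /IH2 ->.
- case=> /pickle_inj Efg; subst g => /eq_in_map Hm.
  congr App; apply: functional_extensionality => i; apply: IH; apply: Hm.
  by rewrite mem_enum.
Qed.

Fixpoint fenc (phi : form M arF arR) : GenTree.tree nat :=
  match phi with
  | Eq t1 t2 => GenTree.Node 0 [:: tenc t1; tenc t2]
  | Rel r a => GenTree.Node 1 (GenTree.Leaf (pickle r) ::
                 map (fun i => tenc (a i)) (enum 'I_(arR r)))
  | Neg phi => GenTree.Node 2 [:: fenc phi]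
  | And phi psi => GenTree.Node 3 [:: fenc phi; fenc psi]
  | Ex phi => GenTree.Node 4 [:: fenc phi]
  end.

Lemma fenc_inj : injective fenc.
Proof.
elim => [t1 t2|r a|phi IH|phi IH psi IH'|phi IH] [u1 u2|s b|chi|chi1 chi2|chi] //=.
- by case=> /tenc_inj -> /tenc_inj ->.
- case=> /pickle_inj Efg; subst s => /eq_in_map Hm.
  congr Rel; apply: functional_extensionality => i; apply: tenc_inj; apply: Hm.
  by rewrite mem_enum.
- by case=> /IH ->.
- by case=> /IH -> /IH' ->.
- by case=> /IH ->.
Qed.

Definition fcode (phi : form M arF arR) : nat := pickle (fenc phi).
Lemma fcode_inj : injective fcode.
Proof. by move=> x y /pickle_inj /fenc_inj. Qed.
End Enc.

Section IPlem.
Variables (M : Type) (op : M -> M -> M) (S : sgStructure op).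
Notation sat1 chi a := (@satS M op S (fun _ : nat => a) chi).
Notation tev := (teval op (@int_fun M op S)).

Lemma sat1_loc (psi : formula S) e : fwf 1 psi -> (satS e psi <-> sat1 psi (e 0)).
Proof. move=> H; apply: sat_local H _ => -[|i] //. Qed.

Lemma sat1_subst (psi : formula S) sigma e : fwf 1 psi ->
  (satS e (fsubst sigma psi) <-> sat1 psi (tev e (sigma 0))).
Proof.
move=> H; rewrite /satS; rewrite sat_fsubst; exact: (sat1_loc (fun i => tev e (sigma i)) H).
Qed.

Lemma step_idem (p q : formula S -> Prop) psi :
  is_ctype 1 p -> is_ctype 2 q -> independent q ->
  (forall phi, p phi -> [/\ q phi, q (fsubst (sub_y S) phi) & q (fsubst (sub_xy S) phi)]) ->
  p psi -> exists u psi', [/\ p psi', sat1 psi u &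
      forall b, sat1 psi' b -> sat1 psi b /\ sat1 psi (op u b)].
Proof.
move=> Hp Hq Hind Hinc Hpsi.
have Hw : fwf 1 psi by case: Hp => Hw _ _; exact: Hw.
case: (Hinc _ Hpsi) => H1 H2 H3.
set theta := And psi (And (fsubst (sub_y S) psi) (fsubst (sub_xy S) psi)).
have Ht : q theta by apply: ctype_and Hq H1 (ctype_and Hq H2 H3).
have [u Hu] := Hind _ Ht.
have Hsem : forall e, satS e (fsubst (sub_x_par S u) theta) ->
   [/\ sat1 psi u, sat1 psi (e 1) & sat1 psi (op u (e 1))].
  move=> e; rewrite /satS sat_fsubst /= => -[A [B C]].
  move/(sat1_loc _ Hw): A => A. move/(sat1_subst _ _ Hw): B => B.
  by move/(sat1_subst _ _ Hw): C => C.
set tau : nat -> term M (@ar_fun M op S) :=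
  fun i => match i with 0 => Mul (Par _ u) (Var _ _ 0) | _ => Var _ _ i end.
set psi' := And psi (fsubst tau psi).
have Hw' : fwf 1 psi'.
  split => //; apply: fwf_fsubst Hw _ => -[|i] //.
have Hs' : forall b, sat1 psi' b <-> sat1 psi b /\ sat1 psi (op u b).
  move=> b; rewrite /psi'.
  have := sat1_subst tau (fun _ => b) Hw.
  rewrite /satS /= => ->. by [].
exists u, psi'; split.
- case: Hp => _ Hcomp Hc.
  have [//|HN] := Hcomp _ Hw'.
  case: (Hinc _ HN) => _ HN2 _.
  case: Hq => _ _ Hcq.
  have [e He] := Hcq [:: fsubst (sub_y S) (Neg psi'); fsubst (sub_x_par S u) theta]
    (fun x Hx => ltac:(case: Hx => [<-|[<-|[]]]; assumption)).
  have [_ A B] := Hsem e (He _ (or_intror (or_introl erefl))).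
  have := He _ (or_introl erefl).
  rewrite /satS sat_fsubst /= => HH; case: HH.
  have := (proj2 (sat1_loc (fun i => tev e (sub_y S i)) Hw')) (proj2 (Hs' (e 1)) (conj A B)).
  by [].
- have [e He] := ctype_sat Hq Hu. by case: (Hsem e He).
- by move=> b /Hs'.
Qed.
End IPlem.

Section IPlem2.
Variables (M : Type) (op : M -> M -> M) (S : sgStructure op).
Notation sat1 chi a := (@satS M op S (fun _ : nat => a) chi).

Lemma idem_IP (p : formula S -> Prop) chi :
  idempotent_type p -> p chi -> IPset op (fun a => sat1 chi a).
Proof.
case=> Hp [q [Hq Hind Hinc]] Hchi.
pose T := {psi | p psi}.
have Hstep : forall t : T, exists uv : M * T,
    sat1 (sval t) uv.1 /\ forall b, sat1 (sval uv.2) b -> sat1 (sval t) b /\ sat1 (sval t) (op uv.1 b).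
  move=> [psi Hpsi]. have [u [psi' [H1 H2 H3]]] := step_idem Hp Hq Hind Hinc Hpsi.
  by exists (u, exist _ psi' H1).
pose g t := proj1_sig (constructive_indefinite_description _ (Hstep t)).
have Hg : forall t, sat1 (sval t) (g t).1 /\
   forall b, sat1 (sval (g t).2) b -> sat1 (sval t) b /\ sat1 (sval t) (op (g t).1 b).
  move=> t; exact: (proj2_sig (constructive_indefinite_description _ (Hstep t))).
pose st := fix st n := match n with 0 => exist _ chi Hchi | n'.+1 => (g (st n')).2 end.
pose u n := (g (st n)).1.
pose A n b := sat1 (sval (st n)) b.
have Amono : forall n m b, n <= m -> A m b -> A n b.
  move=> n m b /subnK <-; elim: (m - n) => //= k IH H.
  by apply: IH; case: (Hg (st (k + n))) => _ /(_ _ H) [].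
have Au : forall n, A n (u n) by move=> n; case: (Hg (st n)).
have Aop : forall n b, A n.+1 b -> A n (op (u n) b).
  by move=> n b H; case: (Hg (st n)) => _ /(_ _ H) [].
have Hall : forall s i, sorted ltn (i :: s) -> A i (lprod op (u i) (map u s)).
  elim=> [|j s IH] i //= /andP[Hij Hs].
  apply: Aop; apply: (Amono _ j) => //; exact: IH.
exists u => x [i [s [Hs ->]]].
exact: (Amono 0 i) (Hall s i Hs).
Qed.
End IPlem2.

Lemma IP_mono (M : Type) (op : M -> M -> M) (X Y : M -> Prop) :
  (forall x, X x -> Y x) -> IPset op X -> IPset op Y.
Proof. by move=> H [u Hu]; exists u => x /Hu /H. Qed.

Lemma dir2 (M : countType) (op : M -> M -> M) :
  (forall (S : sgStructure op) (phi : formula S),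
     fwf 1 phi ->
     IPset op (fun a : M => @satS M op S (fun _ => a) phi) ->
     exists p : formula S -> Prop, idempotent_type p /\ p phi) -> Hindman op.
Proof.
move=> H X Y HX HYX.
pose S := @SgStructure M op void (fun _ => 0) (fun f => match f with end)
            bool (fun _ => 1) (fun r args => if r then X (args ord0) else Y (args ord0)).
pose phiX : formula S := @Rel _ _ _ _ _ true (fun _ => Var _ _ 0).
pose phiY : formula S := @Rel _ _ _ _ _ false (fun _ => Var _ _ 0).
have [p [Hp Hpx]] := H S phiX (fun _ => is_true_true) HX.
have Hp1 := Hp; case: Hp1 => [[Hw Hcomp _] _].
case: (Hcomp phiY (fun _ => is_true_true)) => HY.
- left; apply: IP_mono (idem_IP Hp (ctype_and (proj1 Hp) Hpx HY)).
  by move=> x [].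
- right; apply: IP_mono (idem_IP Hp (ctype_and (proj1 Hp) Hpx HY)).
  by move=> x [].
Qed.

Lemma dir1 (M : countType) (op : M -> M -> M) : Hindman op ->
  (forall (S : sgStructure op) (phi : formula S),
     fwf 1 phi ->
     IPset op (fun a : M => @satS M op S (fun _ => a) phi) ->
     exists p : formula S -> Prop, idempotent_type p /\ p phi).
Proof.
move=> H S phi Hwf [u0 Hu0].
have step : forall (v : nat -> M) (P : M -> Prop), exists v',
   (forall x, FP op v' x -> FP op (fun n => v n.+1) x) /\
   ((forall x, FP op v' x -> P x) \/ (forall x, FP op v' x -> ~ P x)).
  move=> v P.
  have [[v' Hv']|[v' Hv']] := H (FP op (fun n => v n.+1))
     (fun x => FP op (fun n => v n.+1) x /\ P x)
     (ex_intro _ _ (fun x Hx => Hx)) (fun y Hy => proj1 Hy).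
  + exists v'; split; [by move=> x /Hv' []|left; by move=> x /Hv' []].
  + exists v'; split; first by move=> x /Hv' /= [].
    by right => x /Hv' /= [H1 H2] HP; apply: H2.
pose nx v P := proj1_sig (constructive_indefinite_description _ (step v P)).
have Hnx : forall v P, (forall x, FP op (nx v P) x -> FP op (fun n => v n.+1) x) /\
   ((forall x, FP op (nx v P) x -> P x) \/ (forall x, FP op (nx v P) x -> ~ P x)).
  move=> v P; exact: (proj2_sig (constructive_indefinite_description _ (step v P))).
pose Pn n b := forall chi : formula S, fcode chi = n -> satS (fun _ => b) chi.
pose V := fix V n := match n with 0 => u0 | n'.+1 => nx (V n') (Pn n') end.
have VS : forall n x, FP op (V n.+1) x -> FP op (fun k => V n k.+1) x.
  by move=> n x; case: (Hnx (V n) (Pn n)) => + _; apply.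
have Vdec : forall n, (forall x, FP op (V n.+1) x -> Pn n x) \/
                      (forall x, FP op (V n.+1) x -> ~ Pn n x).
  by move=> n; case: (Hnx (V n) (Pn n)).
have Vmono : forall n m x, n <= m -> FP op (V m) x -> FP op (V n) x.
  move=> n m x /subnK <-; elim: (m - n) => // k IH.
  rewrite addSn => Hx; apply: IH; apply: FP_tail; exact: VS.
pose p (chi : formula S) := fwf 1 chi /\ exists n, forall b, FP op (V n) b -> satS (fun _ => b) chi.
have pcomp : forall chi, fwf 1 chi -> p chi \/ p (Neg chi).
  move=> chi Hc; case: (Vdec (fcode chi)) => Hd; [left|right]; split=> //;
    exists (fcode chi).+1 => b Hb.
  - exact: Hd b Hb chi erefl.
  - move=> Hs; apply: (Hd b Hb) => chi' /fcode_inj ->; exact: Hs.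
have Hpc : is_ctype 1 p.
  split; first by move=> ? [].
    exact: pcomp.
  move=> s Hs.
  have [N HN] := @list_max _ (fun n chi => forall b, FP op (V n) b -> satS (fun _ => b) chi)
     (fun n m x Hnm Hx b Hb => Hx b (Vmono _ _ _ Hnm Hb)) s (fun x Hx => proj2 (Hs x Hx)).
  by exists (fun _ => V N 0) => x Hx; exact: HN x Hx _ (FP_head _ _).
pose env2 (a b : M) : nat -> M := fun i => match i with 0 => a | _ => b end.
pose Dp a (chi : formula S) := exists n, forall b, FP op (V n) b -> satS (env2 a b) chi.
have Ddec : forall a chi, fwf 2 chi -> Dp a chi \/ Dp a (Neg chi).
  move=> a chi Hc.
  pose sg : nat -> term M (@ar_fun M op S) :=
    fun i => match i with 0 => Par _ a | j.+1 => Var _ _ j end.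
  have Hw : fwf 1 (fsubst sg chi) by apply: fwf_fsubst Hc _ => -[|[|i]].
  have Hsem : forall b, satS (fun _ => b) (fsubst sg chi) <-> satS (env2 a b) chi.
    move=> b; rewrite /satS sat_fsubst.
    have -> // : (fun i => teval op (@int_fun M op S) (fun _ => b) (sg i)) = env2 a b.
    by apply: functional_extensionality => -[|i].
  case: (pcomp _ Hw) => -[_ [n Hn]]; [left|right]; exists n => b Hb.
  - exact/Hsem/Hn.
  - move=> Hc'; apply: (Hn b Hb); exact/Hsem.
pose c k := V k 0.
pose A j k := forall chi : formula S, fcode chi = j -> fwf 2 chi -> Dp (c k) chi.
pose B j k := forall chi : formula S, fcode chi = j -> fwf 2 chi -> Dp (c k) (Neg chi).
have AB : forall j k, A j k \/ B j k.
  move=> j k; case: (classic (exists chi : formula S, fcode chi = j /\ fwf 2 chi)) =>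
    [[chi [Hj Hc]]|Hn].
  - case: (Ddec (c k) chi Hc) => HD; [left|right] => chi' Hj' _;
      have E : chi' = chi by apply: fcode_inj; rewrite Hj Hj'.
    + by rewrite E.
    + by rewrite E.
  - by left => chi Hj Hc; exfalso; apply: Hn; exists chi.
pose inf (J : nat -> Prop) := forall m, exists k, m <= k /\ J k.
pose I := fix I j := match j with 0 => fun _ : nat => True
  | j'.+1 => fun k => I j' k /\ ((inf (fun k => I j' k /\ A j' k) /\ A j' k) \/
                                 (~ inf (fun k => I j' k /\ A j' k) /\ B j' k)) end.
have Iinf : forall j, inf (I j).
  elim => [|j IH] m; first by exists m.
  case: (classic (inf (fun k => I j k /\ A j k))) => Hi.
  - have [k [Hk [H1 H2]]] := Hi m. exists k; split => //; split => //; left; by split.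
  - have [m0 Hm0] : exists m0, forall k, m0 <= k -> I j k -> ~ A j k.
      apply: NNPP => Hn; apply: Hi => m'; apply: NNPP => Hn2; apply: Hn; exists m'.
      by move=> k Hk HI HA; apply: Hn2; exists k.
    have [k [Hk HI]] := IH (maxn m m0).
    exists k; split; first exact: leq_trans (leq_maxl _ _) Hk.
    split => //; right; split => //.
    case: (AB j k) => // HA; exfalso; exact: Hm0 k (leq_trans (leq_maxr _ _) Hk) HI HA.
have Imono : forall j j' k, j <= j' -> I j' k -> I j k.
  move=> j j' k /subnK <-; elim: (j' - j) => // n IH.
  by rewrite addSn => -[/IH].
have Idec : forall chi, fwf 2 chi ->
   (forall k, I (fcode chi).+1 k -> Dp (c k) chi) \/
   (forall k, I (fcode chi).+1 k -> Dp (c k) (Neg chi)).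
  move=> chi Hc; case: (classic (inf (fun k => I (fcode chi) k /\ A (fcode chi) k))) => Hi;
    [left|right] => k [_ [[Hi' HA]|[Hn HB]]].
  - exact: HA chi erefl Hc.
  - by case: Hn.
  - by case: Hi.
  - exact: HB chi erefl Hc.
pose q (chi : formula S) := fwf 2 chi /\
   exists n, forall k, n <= k -> I n k -> Dp (c k) chi.
have Hqc : is_ctype 2 q.
  split; first by move=> ? [].
    move=> chi Hc; case: (Idec chi Hc) => Hd; [left|right]; split => //;
      exists (fcode chi).+1 => k _ HI; exact: Hd.
  move=> s Hs.
  have [N HN] := @list_max _ (fun n chi => forall k, n <= k -> I n k -> Dp (c k) chi)
     (fun n m x Hnm Hx k Hk HI => Hx k (leq_trans Hnm Hk) (Imono _ _ _ Hnm HI))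
     s (fun x Hx => proj2 (Hs x Hx)).
  have [k [Hk HIk]] := Iinf N N.
  have [N2 HN2] := @list_max _ (fun n chi => forall b, FP op (V n) b -> satS (env2 (c k) b) chi)
     (fun n m x Hnm Hx b Hb => Hx b (Vmono _ _ _ Hnm Hb)) s (fun x Hx => HN x Hx k Hk HIk).
  by exists (env2 (c k) (V N2 0)) => x Hx; exact: HN2 x Hx _ (FP_head _ _).
have Hind : independent q.
  move=> chi [Hc [n Hn]].
  have [k [Hk HI]] := Iinf n n.
  have [N HN] := Hn k Hk HI.
  exists (c k); split.
    by apply: fwf_fsubst Hc _ => -[|[|i]].
  exists 0 => k' _ _; exists N => b Hb.
  rewrite /satS sat_fsubst.
  have -> : (fun i => teval op (@int_fun M op S) (env2 (c k') b) (sub_x_par S (c k) i))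
             = env2 (c k) b by apply: functional_extensionality => -[|i].
  exact: HN b Hb.
have Hinc : forall psi, p psi ->
   [/\ q psi, q (fsubst (sub_y S) psi) & q (fsubst (sub_xy S) psi)].
  move=> psi [Hw [n Hn]]; split.
  - split; first exact: fwf_mono Hw _.
    exists n => k Hk _; exists 0 => b _.
    apply/(sat1_loc _ Hw); exact: Hn _ (Vmono n k _ Hk (FP_head _ _)).
  - split; first by apply: fwf_fsubst Hw _ => -[|i].
    exists 0 => k _ _; exists n => b Hb.
    apply/(sat1_subst _ _ Hw); exact: Hn b Hb.
  - split; first by apply: fwf_fsubst Hw _ => -[|i].
    exists n => k Hk _; exists k.+1 => b Hb.
    apply/(sat1_subst _ _ Hw); apply: Hn.
    exact: Vmono n k _ Hk (FP_head_tail (VS k b Hb)).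
exists p; split.
  split => //; exists q; split => //.
split => //; exists 0 => b Hb; exact: Hu0 b Hb.
Qed.

Theorem mainTheorem1 (M : countType) (op : M -> M -> M)
  (assoc : forall a b c : M, op a (op b c) = op (op a b) c) :
  Hindman op <->
  (forall (S : sgStructure op) (phi : formula S),
     fwf 1 phi ->
     IPset op (fun a : M => @satS M op S (fun _ => a) phi) ->
     exists p : formula S -> Prop, idempotent_type p /\ p phi).
Proof. split; [exact: dir1|exact: dir2]. Qed.
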